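(* Let $G$ be an abelian group of odd order and suppose there exists a Heffter space over $G$ with $r$ parallel classes which is a linear space. Then for every $g\in G$, the order of $g$ divides $r-1$.
   Context: A half-set of an abelian group $G$ of odd order $2v+1\ge7$ is a subset $V\subseteq G\setminus\{0\}$ containing exactly one element of each pair $\{g,-g\}$, $g\ne0$. A Heffter system on $V$ with block size $k$ is a partition of $V$ into blocks of size $k$, each summing to $0$ in $G$. A Heffter space over $G$ is a partial linear space (any two distinct points in at most one block) with point set a half-set $V$ of $G$, together with a resolution (partition of its blocks into parallel classes, each partitioning $V$) in which every parallel class is a Heffter system on $V$. It is a linear space if any two distinct points lie in exactly one block. Its degree is the number of parallel classes. *)

(* Defs.v *)
From mathcomp Require Import all_boot all_fingroup.
Set Implicit Arguments. Unset Strict Implicit. Unset Printing Implicit Defensive.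
Local Open Scope group_scope.

(* The abelian group G is written multiplicatively (a finGroupType with
   abelian [set: gT]); identity 1 plays the role of 0, x^-1 that of -x,
   and the product of a block plays the role of its sum. *)

Definition half_set (gT : finGroupType) (V : {set gT}) : Prop :=
  1 \notin V /\ forall g : gT, g != 1 -> (g \in V) != (g^-1 \in V).

Definition heffter_system (gT : finGroupType) (V : {set gT}) (k : nat)
    (P : {set {set gT}}) : Prop :=
  partition P V /\ forall B, B \in P -> (#|B| = k)%N /\ \prod_(x in B) x = 1.

Definition blocks_of (gT : finGroupType) (r : nat)
    (cls : 'I_r -> {set {set gT}}) : {set {set gT}} :=
  \bigcup_(i < r) cls i.

Definition heffter_space (gT : finGroupType) (V : {set gT}) (k r : nat)
    (cls : 'I_r -> {set {set gT}}) : Prop :=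
  [/\ half_set V,
      forall i, heffter_system V k (cls i),
      forall i j, i != j -> cls i :&: cls j = set0 &
      forall x y, x \in V -> y \in V -> x != y ->
        (#|[set B in blocks_of cls | (x \in B) && (y \in B)]| <= 1)%N].

Definition is_linear_space (gT : finGroupType) (V : {set gT}) (r : nat)
    (cls : 'I_r -> {set {set gT}}) : Prop :=
  forall x y, x \in V -> y \in V -> x != y ->
    (#|[set B in blocks_of cls | (x \in B) && (y \in B)]| = 1)%N.

(* Main.v *)
Require Import Defs.
From HB Require Import structures.
From mathcomp Require Import all_boot all_fingroup all_solvable.
Local Open Scope group_scope.

Section S.
Variable gT : finGroupType.
Hypothesis cT : abelian [set: gT].
Lemma mC : commutative (@mulg gT).
Proof. move=> x y; exact: (centsP cT x (in_setT x) y (in_setT y)). Qed.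
HB.instance Definition _ := SemiGroup.isCommutativeLaw.Build gT mulg mC.

Lemma prodV (V : {set gT}) k P : heffter_system V k P -> \prod_(y in V) y = 1.
Proof.
case=> /and3P[/eqP cov triv _] H.
rewrite -cov big_trivIset //; apply: big1 => B BP; by case: (H B BP).
Qed.

Lemma key (V : {set gT}) k r (cls : 'I_r.+1 -> {set {set gT}}) x :
  heffter_space V k cls -> is_linear_space V cls -> x \in V -> x ^+ r = 1.
Proof.
case=> hV hS hD _ hL xV.
have covi i : cover (cls i) = V by case: (hS i) => /and3P[/eqP -> _ _].
have trivi i : trivIset (cls i) by case: (hS i) => /and3P[_ -> _].
have xc i : x \in cover (cls i) by rewrite covi.
pose pb i := pblock (cls i) x.
have pbm i : pb i \in cls i by exact: pblock_mem.
have xpb i : x \in pb i by rewrite /pb mem_pblock.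
have pbV i : pb i \subset V.
  by rewrite -(covi i); apply/subsetP => y yB; apply/bigcupP; exists (pb i).
have inner i : \prod_(y in pb i :\ x) y = x^-1.
  case: (hS i) => _ /(_ _ (pbm i)) [_].
  rewrite (big_setD1 x (xpb i)) => /eqP; rewrite -eq_invg_mul => /eqP <-.
  by [].
have uniq y : y \in V :\ x -> exists i0, forall i, (y \in pb i) = (i == i0).
  case/setD1P=> yx yV.
  have /cards1P [B0 hB0] : #|[set B in blocks_of cls | (x \in B) && (y \in B)]| == 1%N.
    by rewrite (hL x y xV yV) // eq_sym.
  have : B0 \in [set B in blocks_of cls | (x \in B) && (y \in B)] by rewrite hB0 set11.
  rewrite inE /blocks_of => /andP[/bigcupP[i0 _ B0i0] /andP[xB0 yB0]].
  exists i0 => i; apply/idP/idP; last first.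
    by move/eqP->; rewrite /pb (def_pblock (trivi i0) B0i0 xB0).
  move=> ypb; apply/negPn/negP => ne.
  have : pb i \in [set B in blocks_of cls | (x \in B) && (y \in B)].
    by rewrite inE ypb xpb !andbT /blocks_of; apply/bigcupP; exists i.
  rewrite hB0 inE => /eqP e.
  have : pb i \in cls i :&: cls i0 by rewrite inE pbm e B0i0.
  by rewrite (hD _ _ ne) inE.
have dec : \prod_(y in V :\ x) y = \prod_(i < r.+1) \prod_(y in pb i :\ x) y.
  transitivity (\prod_(i < r.+1) \prod_(y in V :\ x) (if y \in pb i then y else 1)); last first.
    apply: eq_bigr => i _; rewrite -big_mkcondr /=; apply: eq_bigl => y.
    by rewrite !inE -andbA; case yp: (y \in pb i); rewrite ?andbF // (subsetP (pbV i) y yp).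
  rewrite exchange_big /=; apply: eq_bigr => y yVx.
  rewrite -big_mkcond /=; case: (uniq y yVx) => i0 h.
  by rewrite (big_pred1 i0).
have := prodV V k (cls ord0) (hS ord0); rewrite (big_setD1 x xV) dec.
under eq_bigr do rewrite inner.
rewrite big_const_ord.
have -> : iter r.+1 (mulg x^-1) 1 = x^-1 ^+ r.+1.
  by elim: (r.+1) => [|n IH] //=; rewrite IH expgS.
change (x * x^-1 ^+ r.+1 = 1 -> x ^+ r = 1).
rewrite expgS mulgA mulgV mul1g expVgn => /eqP; rewrite invg_eq1 => /eqP //.
Qed.
End S.

Theorem proposition2p1 (gT : finGroupType) (r : nat) :
  abelian [set: gT] -> odd #|gT| -> (7 <= #|gT|)%N ->
  (exists (V : {set gT}) (k : nat) (cls : 'I_r -> {set {set gT}}),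
      heffter_space V k cls /\ is_linear_space V cls) ->
  forall g : gT, (#[g] %| r - 1)%N.
Proof.
move=> cT _ _ [V [k [cls [hH hL]]]] g.
case: r cls hH hL => [|r] cls hH hL; first by rewrite dvdn0.
rewrite subn1 /= order_dvdn.
have K y := @key gT cT V k r cls y hH hL.
case: (eqVneq g 1) => [->|g1]; first by rewrite expg1n.
case: hH => [[_ hV] _ _ _].
case gV: (g \in V); first by rewrite K.
have : g^-1 \in V by move: (hV g g1); rewrite gV; case: (g^-1 \in V).
by move/K; rewrite expVgn => /eqP; rewrite invg_eq1.
Qed.
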